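(* Let $H \in \mathbb{N}_+$, $\bar{R} > 0$, let $\mathcal{S}$ be a state space and $\mathcal{A}$ an action space with $|\mathcal{A}| = 2$ (identified with $\{0,1\}$) and $|\mathcal{S}| \geq 2^H$, and let $\mathcal{C}$ be a feature space. For any policy class $\Theta$ (each $\theta \in \Theta$ giving a map $\mu_\theta : \mathcal{C} \to \{0,1\}$) and any number of episodes $T$, \[ \inf_{\mathsf{Alg} \in \mathcal{D}} \ \sup_{\mathcal{M} \in \mathcal{H}(\Theta)} \mathcal{R}_T(\mathsf{Alg}; \mathcal{M}) \;\geq\; \frac{\bar{R}}{4}\left( \dim_L(\Theta) \wedge 2^H \wedge T - 1 \right), \] where $\wedge$ denotes minimum.
   Context: A deterministic system of horizon $H$ consists of a state space $\mathcal{S}$, action space $\mathcal{A}=\{0,1\}$, a fixed initial state $s_0$, a deterministic transition function $F : \mathcal{S}\times\mathcal{A}\times[H]\to\mathcal{S}$, a deterministic nonnegative reward function $R$ on $\mathcal{S}\times\mathcal{A}\times[H]$, and a feature map assigning to each pair $(s,h)\in\mathcal{S}\times[H]$ a feature vector $\phi_{s,h}\in\mathcal{C}$. Each $\theta\in\Theta$ induces the deterministic policy $(s,h)\mapsto \mu_\theta(\phi_{s,h})$. An episode starts at $s_0$ and runs for $H$ epochs; its total reward is the sum of the rewards collected. $\mathcal{H}(\Theta)$ denotes the class of such $H$-epoch deterministic systems (over $\mathcal{S},\mathcal{A},\mathcal{C}$) in which the total reward of any policy in an episode is at most $\bar{R}$, and whose optimal policy is unique and equals the policy induced by some $\theta^*\in\Theta$.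 $\mathcal{D}$ denotes the class of deterministic learning algorithms: deterministic maps from the entire observation history (observed states/features, actions taken, rewards received in all previous epochs and episodes) to an action in $\mathcal{A}$. For $T$ episodes, the regret of $\mathsf{Alg}$ on $\mathcal{M}$ is $\mathcal{R}_T(\mathsf{Alg};\mathcal{M}) = \sum_{t=1}^T \big( V^*(s_0) - \sum_{h} R_h^{(t)}(\mathsf{Alg})\big)$, where $V^*(s_0)$ is the optimal total reward from $s_0$ and $R_h^{(t)}(\mathsf{Alg})$ is the reward obtained at epoch $h$ of episode $t$. The Littlestone dimension $\dim_L(\Theta)$ is the largest $D$ such that there exists a complete binary tree of depth $D$ whose nodes $v$ are labeled by feature vectors $\phi^{(v)}\in\mathcal{C}$ with the property: for every root-to-leaf path $v_1,\dots,v_D$, letting $b_{v_i}\in\{0,1\}$ denote the direction (left $=0$, right $=1$) taken from $v_i$ along the path, there exists $\theta\in\Theta$ with $\mu_\theta(\phi^{(v_i)}) = b_{v_i}$ for all $i\in[D]$. *)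

(* Defs.v *)
From HB Require Import structures.
From mathcomp Require Import all_boot all_order all_algebra.
From mathcomp Require Import reals.
Set Implicit Arguments. Unset Strict Implicit. Unset Printing Implicit Defensive.
Import Order.TTheory GRing.Theory Num.Theory.
Local Open Scope ring_scope.

(* Action space A = {0,1} is represented by bool (false = 0, true = 1).
   Epochs are indexed 0, ..., H-1 (h : nat, only h < H is ever used). *)

Record dsys (S C : Type) (R : Type) := DSys {
  s0    : S;
  trans : S -> bool -> nat -> S;
  rew   : S -> bool -> nat -> R;
  feat  : S -> nat -> C
}.

Section Sys.
Variables (R : realType) (S C : Type).
Implicit Types (M : dsys S C R).

Definition policy := S -> nat -> bool.

Fixpoint ret_from M (pi : policy) (k h : nat) (s : S) : R :=
  match k with
  | 0 => 0
  | k'.+1 => let a := pi s h in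
             rew M s a h + ret_from M pi k' h.+1 (trans M s a h)
  end.

Fixpoint acts_from M (pi : policy) (k h : nat) (s : S) : seq bool :=
  match k with
  | 0 => [::]
  | k'.+1 => let a := pi s h in a :: acts_from M pi k' h.+1 (trans M s a h)
  end.

Definition value M (H : nat) (pi : policy) : R := ret_from M pi H 0 (s0 M).

Definition pol_of (Theta : Type) (mu : Theta -> C -> bool) M (th : Theta)
  : policy := fun s h => mu th (feat M s h).

(* Uniqueness is understood along
   the episode: every optimal policy takes the same actions from s0 as
   pi_{theta*} (behaviour on unreached (s,h) does not affect anything). *)
Definition in_class (Theta : Type) (mu : Theta -> C -> bool) (H : nat)
  (Rbar : R) M : Prop :=
  (forall s a h, (h < H)%N -> 0 <= rew M s a h) /\
  (forall pi : policy, value M H pi <= Rbar) /\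
  exists thstar : Theta,
    (forall pi : policy, value M H pi <= value M H (pol_of mu M thstar)) /\
    (forall pi : policy, value M H pi = value M H (pol_of mu M thstar) ->
        acts_from M pi H 0 (s0 M) = acts_from M (pol_of mu M thstar) H 0 (s0 M)).

Definition opt_value M (H : nat) (v : R) : Prop :=
  (exists pi : policy, value M H pi = v) /\ (forall pi : policy, value M H pi <= v).

Definition obs := (S * C * bool * R)%type.

(* Deterministic learning algorithm: a map from the entire observation history
   (all previous epochs of all previous episodes and of the current episode)
   and the current state/feature to an action. *)
Definition algo := seq obs -> S -> C -> bool.

Fixpoint run_ep M (alg : algo) (k h : nat) (s : S) (hist : seq obs) : seq obs :=
  match k with
  | 0 => hist
  | k'.+1 =>
      let c := feat M s h in
      let a := alg hist s c in
      run_ep M alg k' h.+1 (trans M s a h) (rcons hist (s, c, a, rew M s a h))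
  end.

Fixpoint run M (alg : algo) (H t : nat) : seq obs :=
  match t with
  | 0 => [::]
  | t'.+1 => run_ep M alg H 0 (s0 M) (run M alg H t')
  end.

(* Rewards collected in episode t (1-based), i.e. R_h^{(t)} for h in [H]. *)
Definition ep_reward M (alg : algo) (H t : nat) : R :=
  \sum_(o <- drop ((t.-1) * H) (run M alg H t)) o.2.

Definition regret M (alg : algo) (H T : nat) (vstar : R) : R :=
  \sum_(1 <= t < T.+1) (vstar - ep_reward M alg H t).

End Sys.

(* Littlestone shattering: a complete binary tree of depth D whose node reached
   by the direction prefix p (p : seq bool of length i < D) is labelled lab p,
   such that for every root-to-leaf path (directions b_0..b_{D-1}) some theta
   realizes mu theta (phi^{(v_i)}) = b_i for all i < D.
   dim_L(Theta) >= D  iff  ltree_shattered mu D. *)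
Definition ltree_shattered (Theta C : Type) (mu : Theta -> C -> bool) (D : nat)
  : Prop :=
  exists lab : seq bool -> C,
    forall path : seq bool, size path = D ->
      exists th : Theta, forall i, (i < D)%N ->
        mu th (lab (take i path)) = nth false path i.

(* Main.v *)
Require Import Defs.
From HB Require Import structures.
From mathcomp Require Import all_boot all_order all_algebra.
From mathcomp Require Import reals.
From mathcomp Require Import zify ring lra.
From Stdlib Require Import ClassicalEpsilon.
Import Order.TTheory GRing.Theory Num.Theory.
Local Open Scope ring_scope.

Section Constr.
Variables (R : realType) (S C : Type) (H : nat) (Rbar : R) (D : nat).
Variables (e : seq bool -> S) (r : S -> seq bool) (lab : seq bool -> C).
Hypothesis re : forall q, (size q < H)%N -> r (e q) = q.

Definition sysM (rw : seq bool -> R) : dsys S C R :=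
  DSys (e [::]) (fun s a _ => e (rcons (r s) a)) (fun s a _ => rw (rcons (r s) a))
       (fun s h => if (h < D)%N then lab (r s) else lab [::]).

Definition rwB (B : seq bool) (q : seq bool) : R := if q == B then Rbar else 0.
Definition rw0 (q : seq bool) : R := 0.

Fixpoint ep_acts (M : dsys S C R) (alg : algo R S C) (k h : nat) (s : S)
  (hist : seq (obs R S C)) : seq bool :=
  match k with
  | 0 => [::]
  | k'.+1 =>
      let c := feat M s h in
      let a := alg hist s c in
      a :: ep_acts M alg k' h.+1 (trans M s a h) (rcons hist (s, c, a, rew M s a h))
  end.

Lemma ret_sys (B : seq bool) pi k h q : size B = H -> (size q + k.+1 = H)%N ->
  ret_from (sysM (rwB B)) pi k.+1 h (e q) =
  rwB B (q ++ acts_from (sysM (rwB B)) pi k.+1 h (e q)).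
Proof.
elim: k h q => [|k IH] h q hB hs /=.
  by rewrite re ?addr0 ?cats1 //; lia.
rewrite re; last by lia.
set a := pi _ _.
have := IH h.+1 (rcons q a) hB; rewrite size_rcons /= => ->; last by lia.
rewrite cat_rcons {1}/rwB; case: eqP => [E|_]; last by rewrite add0r.
by move: hs; rewrite -hB -E size_rcons; lia.
Qed.

Lemma acts_star (B : seq bool) pi k q : size B = H ->
  (forall q, (size q < H)%N -> q = take (size q) B -> pi (e q) (size q) = nth false B (size q)) ->
  (size q + k = H)%N -> q = take (size q) B ->
  acts_from (sysM (rwB B)) pi k (size q) (e q) = drop (size q) B.
Proof.
move=> hB hpi.
elim: k q => [|k IH] q hs hq /=.
  by rewrite drop_oversize // hB; lia.
have hq' : (size q < size B)%N by rewrite hB; lia.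
rewrite re; last by lia.
rewrite hpi //; last by lia.
rewrite (drop_nth false hq'); congr (_ :: _).
have := IH (rcons q (nth false B (size q))); rewrite size_rcons; apply.
  lia.
by rewrite (take_nth false hq') -hq.
Qed.

Lemma sim (B : seq bool) alg k h q hist : size B = H -> (size q + k = H)%N ->
  q ++ ep_acts (sysM rw0) alg k h (e q) hist != B ->
  run_ep (sysM (rwB B)) alg k h (e q) hist = run_ep (sysM rw0) alg k h (e q) hist.
Proof.
move=> hB; elim: k h q hist => [|k IH] h q hist hs hne //=.
rewrite re; last by lia.
set a := alg _ _ _.
have -> : rwB B (rcons q a) = rw0 (rcons q a).
  rewrite /rwB /rw0; case: eqP => // E; exfalso.
  move: hne => /=; rewrite re /=; last by lia.
  case: k IH hs => [|k] IH hs.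
    by rewrite /= -/a cats1 E eqxx.
  move=> _; move: hs; rewrite -hB -E size_rcons => hh; suff: (size q + k.+2 == size q + 1)%N by rewrite eqn_add2l. by rewrite hh addn1.
apply: IH; first by rewrite size_rcons; lia.
by move: hne => /=; rewrite re /= -/a ?cat_rcons //; lia.
Qed.

Lemma sum_run_ep0 alg k h s hist :
  \sum_(o <- run_ep (sysM rw0) alg k h s hist) o.2 = \sum_(o <- hist) o.2.
Proof.
elim: k h s hist => [|k IH] h s hist //=.
by rewrite IH -cats1 big_cat big_seq1 /= /rw0 addr0.
Qed.

Lemma run_epS (M : dsys S C R) alg k h s hist :
  run_ep M alg k.+1 h s hist =
  run_ep M alg k h.+1 (trans M s (alg hist s (feat M s h)) h)
    (rcons hist (s, feat M s h, alg hist s (feat M s h), rew M s (alg hist s (feat M s h)) h)).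
Proof. by []. Qed.

Lemma ep_actsS (M : dsys S C R) alg k h s hist :
  ep_acts M alg k.+1 h s hist =
  alg hist s (feat M s h) :: ep_acts M alg k h.+1 (trans M s (alg hist s (feat M s h)) h)
    (rcons hist (s, feat M s h, alg hist s (feat M s h), rew M s (alg hist s (feat M s h)) h)).
Proof. by []. Qed.

Lemma sum_run_epB (B : seq bool) alg k h q hist : size B = H -> (size q + k.+1 = H)%N ->
  \sum_(o <- run_ep (sysM (rwB B)) alg k.+1 h (e q) hist) o.2 =
  \sum_(o <- hist) o.2 + rwB B (q ++ ep_acts (sysM (rwB B)) alg k.+1 h (e q) hist).
Proof.
move=> hB; elim: k h q hist => [|k IH] h q hist hs.
  have req : r (e q) = q by apply: re; lia.
  by rewrite /= -cats1 big_cat big_seq1 /= req ?cats1.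
rewrite run_epS ep_actsS.
set a := alg _ _ _.
have req : r (e q) = q by apply: re; lia.
have -> : trans (sysM (rwB B)) (e q) a h = e (rcons q a) by rewrite /= req.
have -> : rew (sysM (rwB B)) (e q) a h = rwB B (rcons q a) by rewrite /= req.
have -> : rwB B (rcons q a) = 0.
  rewrite /rwB; case: eqP => // E.
  move: hs; rewrite -hB -E size_rcons => hh.
  suff: (size q + k.+2 == size q + 1)%N by rewrite eqn_add2l.
  by rewrite hh addn1.
rewrite IH; last by rewrite size_rcons; lia.
rewrite -cats1 big_cat big_seq1 cats1 -addrA cat_rcons /= add0r.
by [].
Qed.

Lemma run_ep_cat (M : dsys S C R) alg k h s hist :
  exists l, run_ep M alg k h s hist = hist ++ l /\ size l = k.
Proof.
elim: k h s hist => [|k IH] h s hist /=; first by exists [::]; rewrite cats0.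
set o := (_, _, _, _).
have [l [-> hl]] := IH h.+1 (trans M s (alg hist s (feat M s h)) h) (rcons hist o).
by exists (o :: l); rewrite cat_rcons /= hl.
Qed.

Lemma size_run (M : dsys S C R) alg t : size (run M alg H t) = (t * H)%N.
Proof.
elim: t => [|t IH] //=.
have [l [-> hl]] := run_ep_cat M alg H 0 (s0 M) (run M alg H t).
by rewrite size_cat IH hl mulSn addnC.
Qed.

Lemma ep_reward_diff (M : dsys S C R) alg t :
  ep_reward M alg H t.+1 =
  \sum_(o <- run M alg H t.+1) o.2 - \sum_(o <- run M alg H t) o.2.
Proof.
rewrite /ep_reward /=.
have [l [-> hl]] := run_ep_cat M alg H 0 (s0 M) (run M alg H t).
by rewrite drop_size_cat ?size_run // big_cat /= addrC addrK.
Qed.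

End Constr.
Fixpoint code (q : seq bool) : nat :=
  match q with [::] => 1%N | a :: q' => (a + 2 * code q')%N end.

Lemma code_gt0 q : (0 < code q)%N.
Proof. by elim: q => [|a q IH] //=; case: a; lia. Qed.

Lemma code_inj q1 q2 : code q1 = code q2 -> q1 = q2.
Proof.
elim: q1 q2 => [|a q1 IH] [|a' q2] //=.
- by have := code_gt0 q2; case: a'; lia.
- by have := code_gt0 q1; case: a; lia.
- move=> hc; have [ea ec] : a = a' /\ code q1 = code q2.
    by case: a a' hc => [] [] /= hc; split => //; lia.
  by rewrite ea (IH _ ec).
Qed.

Lemma code_lt q : (code q < 2 ^ (size q).+1)%N.
Proof.
elim: q => [|a q IH] //=.
rewrite expnS; case: a; lia.
Qed.

Theorem theorem3 (R : realType) (S C Theta : Type) (mu : Theta -> C -> bool)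
  (H : nat) (Rbar : R) (T : nat)
  (hH : (0 < H)%N) (hRbar : 0 < Rbar)
  (hS : exists f : 'I_(2 ^ H) -> S, injective f)
  (D : nat) (hD : ltree_shattered mu D) :
  forall alg : algo R S C, forall eps : R, 0 < eps ->
    exists M : dsys S C R, exists vstar : R,
      in_class mu H Rbar M /\ opt_value M H vstar /\
      Rbar / 4%:R * ((minn (minn D (2 ^ H)) T)%:R - 1) - eps
        < regret M alg H T vstar.
Proof.
move=> alg eps heps.
case: hS => f finj; case: hD => lab hlab.
have h2H : (0 < 2 ^ H)%N by rewrite expn_gt0.
pose i0 : 'I_(2 ^ H) := Ordinal h2H.
pose e q := f (insubd i0 (code q)).
have einj : forall q1 q2, (size q1 < H)%N -> (size q2 < H)%N -> e q1 = e q2 -> q1 = q2.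
  move=> q1 q2 h1 h2 /finj /(congr1 val); rewrite !val_insubd.
  have c1 : (code q1 < 2 ^ H)%N.
    apply: (leq_trans (code_lt q1)); by rewrite leq_exp2l.
  have c2 : (code q2 < 2 ^ H)%N.
    apply: (leq_trans (code_lt q2)); by rewrite leq_exp2l.
  rewrite c1 c2; exact: code_inj.
pose r s := epsilon (inhabits [::]) (fun q => (size q < H)%N /\ e q = s).
have re : forall q, (size q < H)%N -> r (e q) = q.
  move=> q hq.
  have [h1 h2] := epsilon_spec (inhabits [::]) (fun q' => (size q' < H)%N /\ e q' = e q)
     (ex_intro _ q (conj hq erefl)).
  exact: einj.
pose d := minn D H.
pose K := minn (minn D (2 ^ H)) T.
pose M0 := sysM R S C D e r lab (rw0 R).
pose acts t := ep_acts R S C M0 alg H 0 (e [::]) (run M0 alg H t).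
pose L := [seq take d (acts t) | t <- iota 0 K.-1].
have hKd : (K <= 2 ^ d)%N.
  rewrite /K /d; case: (leqP D H) => hDH.
    apply: (leq_trans (geq_minl _ _)).
    apply: (leq_trans (geq_minl _ _)); exact: ltnW (ltn_expl _ (ltnSn 1)).
  apply: (leq_trans (geq_minl _ _)).
  exact: geq_minr.
have h2d : (0 < 2 ^ d)%N by rewrite expn_gt0.
have [b [hb hbL]] : exists b : seq bool, size b = d /\ b \notin L.
  case: (boolP [exists t : d.-tuple bool, tval t \notin L]) => [/existsP [t ht]|].
    by exists (tval t); rewrite size_tuple.
  rewrite negb_exists => /forallP hall; exfalso.
  have : (size (map val (enum {: d.-tuple bool})) <= size L)%N.
    apply: uniq_leq_size.
      by rewrite map_inj_uniq ?enum_uniq //; exact: val_inj.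
    move=> x /mapP [t _ ->]; have := hall t; by rewrite negbK.
  rewrite size_map -cardE card_tuple card_bool size_map size_iota.
  by lia.
have hdD : (d <= D)%N by exact: geq_minl.
have hdH : (d <= H)%N by exact: geq_minr.
pose path := b ++ nseq (D - d) false.
have hpath : size path = D by rewrite size_cat size_nseq hb; lia.
have [th hth] := hlab path hpath.
pose B := b ++ nseq (H - d) (mu th (lab [::])).
have hB : size B = H by rewrite size_cat size_nseq hb; lia.
pose MB := sysM R S C D e r lab (rwB R Rbar B).
have hH1 : H.-1.+1 = H by rewrite prednK.
have vform : forall pi, value MB H pi = rwB R Rbar B (acts_from MB pi H 0 (e [::])).
  move=> pi; have := @ret_sys R S C H Rbar D e r lab re B pi H.-1 0 [::] hB.
  by rewrite hH1 /=; apply.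
have hstar : acts_from MB (pol_of mu MB th) H 0 (e [::]) = B.
  have := @acts_star R S C H Rbar D e r lab re B (pol_of mu MB th) H [::] hB.
  rewrite drop0; apply => //.
  move=> q hq hqB; rewrite /pol_of /= re //.
  case: (ltnP (size q) D) => hqD.
    have hqd : (size q < d)%N by rewrite leq_min hqD.
    have hq' : q = take (size q) path.
      by rewrite {1}hqB /B /path !takel_cat // hb ltnW.
    rewrite {1}hq' hth // /path /B !nth_cat hb hqd //.
  have edD : d = D by apply/minn_idPl; lia.
  have hdq : (d <= size q)%N by rewrite edD.
  rewrite /B nth_cat hb ltnNge hdq /= nth_nseq.
  by have -> : (size q - d < H - d)%N by lia.
  by rewrite take0.
have hBv : value MB H (pol_of mu MB th) = Rbar by rewrite vform hstar /rwB eqxx.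
have rwB_le : forall q, rwB R Rbar B q <= Rbar.
  by move=> q; rewrite /rwB; case: eqP => _ //; exact: ltW.
exists MB, Rbar; split; [|split].
- split; first by move=> s a h _; rewrite /= /rwB; case: eqP => _ //; exact: ltW.
  split; first by move=> pi; rewrite vform.
  exists th; split; first by move=> pi; rewrite hBv vform.
  move=> pi; rewrite hBv vform hstar /rwB; case: eqP => // _ E.
  by move: hRbar; rewrite -E ltxx.
- split; first by exists (pol_of mu MB th).
  by move=> pi; rewrite vform.
have hrun : forall t, (t <= K.-1)%N -> run MB alg H t = run M0 alg H t.
  elim => [|t IH] ht //.
  rewrite /= IH; last by lia.
  apply: (@sim R S C H Rbar D e r lab re B alg H 0 [::]) => //.
  apply/negP => /eqP E.
  move: hbL; rewrite /L; apply/negP; rewrite negbK.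
  have hat : acts t = B by rewrite -E.
  have -> : b = take d (acts t) by rewrite hat /B take_size_cat.
  apply: map_f; rewrite mem_iota; lia.
have hep0 : forall t, (0 < t)%N -> (t < K)%N -> ep_reward MB alg H t = 0.
  case => [|t] // _ htK.
  rewrite ep_reward_diff !hrun; [|lia|lia].
  by rewrite /= sum_run_ep0 subrr.
have hepB : forall t, ep_reward MB alg H t <= Rbar.
  case => [|t]; first by rewrite /ep_reward /= big_nil; exact: ltW.
  rewrite ep_reward_diff.
  have := @sum_run_epB R S C H Rbar D e r lab re B alg H.-1 0 [::] (run MB alg H t) hB.
  rewrite hH1 /= => ->; last by [].
  by rewrite addrC addKr.
have hterm : forall t, 0 <= Rbar - ep_reward MB alg H t.
  by move=> t; rewrite subr_ge0.
have h4 : 0 < Rbar / 4%:R by rewrite divr_gt0.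
rewrite /regret -/K.
case: (posnP K) => [K0|Kpos].
  rewrite K0 sub0r mulrN1.
  have : 0 <= \sum_(1 <= t < T.+1) (Rbar - ep_reward MB alg H t).
    by apply: sumr_ge0 => t _.
  lra.
have hKT : (K <= T.+1)%N by rewrite /K; apply: (leq_trans (geq_minr _ _)).
rewrite (big_cat_nat _ (n:=K)) //=.
have hrest : 0 <= \sum_(K <= t < T.+1) (Rbar - ep_reward MB alg H t).
  by apply: sumr_ge0 => t _.
have -> : \sum_(1 <= t < K) (Rbar - ep_reward MB alg H t) = \sum_(1 <= t < K) Rbar.
  apply: eq_big_nat => t /andP [ht1 ht2]; by rewrite hep0 // subr0.
rewrite sumr_const_nat -[Rbar *+ _]mulr_natr natrB //.
have hx : 0 <= (K%:R - 1 : R).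
  by rewrite subr_ge0 ler1n.
have : Rbar / 4%:R * (K%:R - 1) <= Rbar * (K%:R - 1).
  apply: ler_wpM2r => //; lra.
lra.
Qed.
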